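(* Let $n\ge 1$ and let $\mathbf{c}=(c_1,\dots,c_n)$ be a cover object whose joint distribution $P_c$ is a correlated multivariate quantized Gaussian distribution (CMQGD) with mean vector $\vec{\mu_c}$ and positive definite covariance matrix $\Sigma_c$, these parameters being known to the sender, the receiver and the eavesdropper. Let the stego-object be $\mathbf{s}=\mathbf{c}+\mathbf{m}$, where the coded message $\mathbf{m}$ has distribution $P_m$, and suppose the stego distribution $P_s$ is a CMQGD with parameters $(\vec{\mu_s},\Sigma_s)$. Use the entropy approximation $H(P)\approx \tfrac12\ln(2\pi e|\Sigma|)+b$ for a CMQGD with covariance $\Sigma$ quantized with $b$ bits, and take the KL-divergence to be $$\mathcal{D}(P_s\parallel P_c)=\tfrac12\Big(\mathrm{tr}(\Sigma_c^{-1}\Sigma_s)+(\vec{\mu_c}-\vec{\mu_s})^T\Sigma_c^{-1}(\vec{\mu_c}-\vec{\mu_s})+\ln\tfrac{|\Sigma_c|}{|\Sigma_s|}-n\Big).$$ Consider the optimization problem of maximizing $H(P_s)$ over $P_m$ subject to $\mathcal{D}(P_s\parallel P_c)\le 2\epsilon^2$, for a design parameter $\epsilon>0$ limiting the detection capability of the optimal steganalysis detector (i.e. $P_D\le\sqrt{\mathcal{D}(P_s\parallel P_c)/2}\le\epsilon$). Then: (1) the solution is achieved when $P_m$ is a CMQGD with mean $\vec{\mu_m}=0$ and covariance $\Sigma_m=\big(-W(-\tfrac{4\epsilon^2}{n}-1-i\pi)-1\big)\Sigma_c$, where $W$ is the WrightOmega function; (2) the maximum achievable embedding rate is $I(P_s;P_m)\approx\frac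 n2\ln\big(-W(-\tfrac{4\epsilon^2}{n}-1-i\pi)\big)$ for sufficiently large $n$.
   Context: A CMQGD is a uniformly quantized version of a (correlated) multivariate Gaussian distribution. $P_D$ is the probability of correct detection by the eavesdropper's steganalysis detector performing a binary hypothesis test (no embedding vs. embedding). The embedding rate is the mutual information $I(P_s;P_m)=H(P_s)-H(P_s\mid P_m)=H(P_s)-H(P_c)$. The WrightOmega function $W(z)$ is the function satisfying $W(z)+\ln W(z)=z$, given by $W(z)=\mathcal{W}_{\lceil(\mathrm{Im}(z)-\pi)/(2\pi)\rceil}(e^z)$ where $\mathcal{W}_k$ are the branches of the Lambert W function. $|\cdot|$ denotes the determinant. *)

(* Defs.v *)
From HB Require Import structures.
From mathcomp Require Import all_boot all_order all_algebra.
From mathcomp Require Import all_classical all_reals all_analysis.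
Set Implicit Arguments. Unset Strict Implicit. Unset Printing Implicit Defensive.
Import Order.TTheory GRing.Theory Num.Theory.
Local Open Scope ring_scope.

Section Defs.
Variable R : realType.

Definition posdef (n : nat) (A : 'M[R]_n) : Prop :=
  A^T = A /\ forall v : 'rV[R]_n, v != 0 -> 0 < (v *m A *m v^T) 0 0.

Definition H_cmqgd (n : nat) (b : R) (S : 'M[R]_n) : R :=
  2^-1 * ln ((2 * pi * expR 1) ^+ n * \det S) + b.

Definition KL_cmqgd (n : nat) (mus : 'rV[R]_n) (Ss : 'M[R]_n)
    (muc : 'rV[R]_n) (Sc : 'M[R]_n) : R :=
  2^-1 * (\tr (invmx Sc *m Ss)
          + ((muc - mus) *m invmx Sc *m (muc - mus)^T) 0 0
          + ln (\det Sc / \det Ss) - n%:R).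

(* Real branch W_{-1} of the Lambert W function on [-1/e, 0):
   the unique real w <= -1 with w e^w = x. *)
Definition lambertW_m1 (x : R) : R :=
  xget 0 [set w : R | w <= -1 /\ w * expR w = x]%classic.

(* WrightOmega W(z) = W_{ceil((Im z - pi)/(2 pi))}(e^z), specialised to
   arguments z = u - i*pi (Im z = -pi): the branch index is -1 and
   e^z = - e^u, so W(u - i pi) = W_{-1}(- e^u). *)
Definition wrightOmega_negpi (u : R) : R := lambertW_m1 (- expR u).

End Defs.

(* Main.v *)
Require Import Defs.
From HB Require Import structures.
From mathcomp Require Import all_boot all_order all_algebra.
From mathcomp Require Import all_classical all_reals all_analysis.
From mathcomp Require Import lra ring.
Import Order.TTheory GRing.Theory Num.Theory.
Import numFieldNormedType.Exports.
Local Open Scope classical_set_scope.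
Local Open Scope ring_scope.
Set Implicit Arguments. Unset Strict Implicit. Unset Printing Implicit Defensive.
Section S. Variable R : realType.
Lemma k_exists (a : R) : 0 < a -> exists t : R, 0 <= t /\ t - expR t = - a - 1.
Proof.
move=> a0.
have cont : {within `[0, a + 1], continuous (fun t : R => t - expR t)}.
  apply: continuous_subspaceT => x; apply: continuousB => //; exact: continuous_expR.
have h1 : (a + 1) - expR (a + 1) <= - a - 1.
  have e : expR (a + 1) = expR ((a+1)/2) ^+ 2 by rewrite expr2 -expRD -splitr.
  have := expR_ge1Dx ((a+1)/2) => h.
  have h2 : (1 + (a+1)/2) ^+ 2 <= expR ((a+1)/2) ^+ 2.
    rewrite ler_pXn2r// ?nnegrE; [lra|]; exact: expR_ge0.
  rewrite e; move: h2; set E := expR _ ^+ 2; have := sqr_ge0 (a - 1); rewrite !expr2 => *; nra.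
have [t tI tE] : exists2 c, c \in `[0, a + 1] & c - expR c = - a - 1.
  apply: IVT => //; first lra.
  rewrite expR0; apply/andP; split.
  - by rewrite ge_min h1 orbT.
  - rewrite le_max; apply/orP; left; lra.
exists t; split => //; by move: tI; rewrite in_itv /= => /andP[].
Qed.
Lemma k_props (a : R) : 0 < a ->
  let k := - wrightOmega_negpi (- a - 1) in 1 < k /\ k - 1 - ln k = a.
Proof.
move=> a0 k.
have [t [t0 tE]] := @k_exists a a0.
have : [set w : R | w <= -1 /\ w * expR w = - expR (- a - 1)] (xget 0 [set w : R | w <= -1 /\ w * expR w = - expR (- a - 1)]).
  apply: xgetPex; exists (- expR t); split.
    have := expR_ge1Dx t; rewrite lerN2; lra.
  by rewrite mulNr -expRD tE.
rewrite /k /wrightOmega_negpi /lambertW_m1.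
set w := xget _ _ => -[w1 wE].
have k1 : 1 <= - w by lra.
have kp : 0 < - w by lra.
have e : ln (- w) - (- w) = - a - 1.
  have : (- w) * expR (- (- w)) = expR (- a - 1) by rewrite opprK mulNr wE opprK.
  move=> /(congr1 (@ln R)); rewrite expRK lnM ?posrE ?expR_gt0 // expRK => <-. by [].
have ka : - w - 1 - ln (- w) = a by lra.
split => //.
rewrite lt_neqAle k1 andbT; apply/negP => /eqP h1.
by move: ka; rewrite -h1 ln1 => ha; move: a0; rewrite -ha; lra.
Qed.
Lemma posdef_block n (a : 'M[R]_1) (S : 'M[R]_n) :
  posdef (block_mx a 0 0 S) -> 0 < a 0 0 /\ posdef S.
Proof.
move=> [sA pA]; split.
  have h : (row_mx (1%:M : 'M[R]_1) (0 : 'rV[R]_n)) != 0.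
    apply/negP => /eqP; rewrite -row_mx0 => /eq_row_mx [/matrixP/(_ 0 0)] .
    by rewrite !mxE /= => /eqP; rewrite oner_eq0.
  have := pA _ h.
  by rewrite mul_row_block tr_row_mx mul_row_col !mulmx0 !mul0mx !addr0 trmx0 mulmx0 addr0 mul1mx trmx1 mulmx1.
split.
  move: sA; rewrite tr_block_mx => /eq_block_mx [_ _ _ ->] //.
move=> v v0.
have h : (row_mx (0 : 'rV[R]_1) v) != 0.
  apply/negP => /eqP; rewrite -row_mx0 => /eq_row_mx [_ /eqP]; exact/negP.
have := pA _ h.
rewrite mul_row_block tr_row_mx mul_row_col !mulmx0 !mul0mx !add0r trmx0 mulmx0 add0r.
by [].
Qed.
Lemma posdef_congr n (P A : 'M[R]_n) : P \in unitmx -> posdef A -> posdef (P *m A *m P^T).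
Proof.
move=> uP [sA pA]; split.
  by rewrite !trmx_mul trmxK sA mulmxA.
move=> v v0.
have vP0 : v *m P != 0.
  apply: contra v0 => /eqP h; apply/eqP.
  by rewrite -(mulmxK uP v) h mul0mx.
have := pA _ vP0.
by rewrite trmx_mul !mulmxA.
Qed.
Lemma posdef_ul n (a : 'M[R]_1) v w (C : 'M[R]_n) :
  posdef (block_mx a v w C) -> 0 < a 0 0.
Proof.
move=> [sA pA].
have h : (row_mx (1%:M : 'M[R]_1) (0 : 'rV[R]_n)) != 0.
  apply/negP => /eqP; rewrite -row_mx0 => /eq_row_mx [/matrixP/(_ 0 0)] .
  by rewrite !mxE /= => /eqP; rewrite oner_eq0.
have := pA _ h.
by rewrite mul_row_block tr_row_mx mul_row_col !mul0mx !addr0 trmx0 !mulmx0 ?addr0 mul1mx trmx1 mulmx1.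
Qed.

Lemma ldl_step n (IH : forall S : 'M[R]_n, posdef S -> exists (P : 'M[R]_n) (d : 'rV[R]_n),
     \det P = 1 /\ P *m S *m P^T = diag_mx d /\ forall i, 0 < d 0 i /\ d 0 i <= S i i)
  (a : 'M[R]_1) v w (C : 'M[R]_n) : posdef (block_mx a v w C) ->
  exists (P : 'M[R]_(1 + n)) (d : 'rV[R]_(1 + n)),
     \det P = 1 /\ P *m block_mx a v w C *m P^T = diag_mx d /\
     forall i, 0 < d 0 i /\ d 0 i <= block_mx a v w C i i.
Proof.
move=> hA.
have a0 := posdef_ul hA.
have [sA _] := hA.
move: (sA); rewrite tr_block_mx => /eq_block_mx [_ wv _ _].
set al := a 0 0.
have ea : a = al%:M by exact: mx11_scalar.
pose E : 'M[R]_(1 + n) := block_mx 1%:M 0 (- al^-1 *: w) 1%:M.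
pose S := C - al^-1 *: (w *m v).
have dE : \det E = 1 by rewrite det_lblock !det1 mulr1.
have uE : E \in unitmx by rewrite unitmxE dE unitr1.
have EA : E *m block_mx a v w C *m E^T = block_mx a 0 0 S.
  have alv : al * al^-1 = 1 by rewrite mulfV // gt_eqF.
  have wa : (- al^-1 *: w) *m a = - w.
    by rewrite ea mul_mx_scalar scalerA mulrN alv scaleN1r.
  have av : a *m (- al^-1 *: w)^T = - v.
    by rewrite ea mul_scalar_mx linearZ /= wv scalerA mulrN alv scaleN1r.
  rewrite /E tr_block_mx !trmx1 trmx0 !mulmx_block.
  rewrite !mul0mx !mulmx0 !mul1mx !mulmx1 !addr0 ?add0r wa av !addNr mul0mx add0r.
  by rewrite /S -scalemxAl scaleNr addrC.
have pB : posdef (block_mx a 0 0 S) by rewrite -EA; exact: posdef_congr.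
have [_ pS] := posdef_block pB.
have [P' [d' [dP' [PS hd']]]] := IH S pS.
pose B : 'M[R]_(1 + n) := block_mx 1%:M 0 0 P'.
exists (B *m E), (row_mx a d'); split.
  by rewrite det_mulmx dE det_ublock det1 dP' !mulr1.
split.
  rewrite trmx_mul.
  have -> : B *m E *m block_mx a v w C *m (E^T *m B^T) = B *m (E *m block_mx a v w C *m E^T) *m B^T by rewrite !mulmxA.
  rewrite EA.
  rewrite /B tr_block_mx !trmx0 trmx1 !mulmx_block.
  rewrite !mul0mx !mulmx0 !mul1mx !mulmx1 !addr0 !add0r diag_mx_row PS mul0mx.
  congr block_mx; apply/matrixP => i j.
  by rewrite !ord1 !mxE eqxx mulr1n.
move=> i; case: (split_ordP i) => j ->.
  rewrite row_mxEl block_mxEul !ord1; split => //.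
have [h1 h2] := hd' j.
rewrite row_mxEr block_mxEdr; split => //.
apply: (le_trans h2).
rewrite /S !mxE big_ord1 -wv mxE lerBlDr lerDl.
by apply: mulr_ge0; [rewrite invr_ge0 ltW | rewrite -expr2 sqr_ge0].
Qed.
Lemma ldl n (A : 'M[R]_n) : posdef A -> exists (P : 'M[R]_n) (d : 'rV[R]_n),
     \det P = 1 /\ P *m A *m P^T = diag_mx d /\ forall i, 0 < d 0 i /\ d 0 i <= A i i.
Proof.
elim: n A => [|n IH] A hA.
  exists 1%:M, 0; split; first by rewrite det1.
  split; first by apply/matrixP => [[]].
  by case.
pose A' : 'M[R]_(1 + n) := A.
have hB : posdef (block_mx (ulsubmx A') (ursubmx A') (dlsubmx A') (drsubmx A')) by rewrite submxK.
have := ldl_step IH hB.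
by rewrite submxK.
Qed.
Lemma ln_prod n (d : 'I_n -> R) : (forall i, 0 < d i) ->
  0 < \prod_i d i /\ ln (\prod_i d i) = \sum_i ln (d i).
Proof.
move=> hd.
apply: (big_ind2 (fun x y => 0 < x /\ ln x = y)).
- by rewrite ln1.
- move=> x1 x2 y1 y2 [h1 <-] [h2 <-]; split; first exact: mulr_gt0.
  by rewrite lnM.
- by move=> i _; split.
Qed.

Lemma key n (B : 'M[R]_n) (p c0 : R) : (forall x, 0 < x -> p * ln x - x <= c0) ->
  posdef B -> 0 < \det B /\ p * ln (\det B) - \tr B <= n%:R * c0.
Proof.
move=> hc hB.
have [P [d [dP [PB hd]]]] := ldl hB.
have dB : \det B = \prod_i d 0 i.
  by rewrite -det_diag -PB !det_mulmx det_tr dP mul1r mulr1.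
have [pos lnE] := @ln_prod n (fun i => d 0 i) (fun i => (hd i).1).
rewrite dB; split => //.
rewrite lnE mulr_sumr.
have trB : \sum_i d 0 i <= \tr B.
  by rewrite /mxtrace; apply: ler_sum => i _; exact: (hd i).2.
apply: (@le_trans _ _ (\sum_i (p * ln (d 0 i)) - \sum_i d 0 i)).
  by rewrite lerD2l lerN2.
rewrite -sumrB.
have -> : n%:R * c0 = \sum_(i < n) c0 by rewrite sumr_const card_ord mulr_natl.
apply: ler_sum => i _; exact: hc (hd i).1.
Qed.
Lemma whiten n (A : 'M[R]_n) : posdef A -> exists M : 'M[R]_n,
  [/\ M \in unitmx, M *m A *m M^T = 1%:M, \det M ^+ 2 * \det A = 1 & invmx A = M^T *m M].
Proof.
move=> hA.
have [Q [d [dQ [QA hd]]]] := ldl hA.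
pose G : 'M[R]_n := diag_mx (\row_i (Num.sqrt (d 0 i))^-1).
have MA : G *m Q *m A *m (G *m Q)^T = 1%:M.
  rewrite trmx_mul tr_diag_mx.
  have -> : G *m Q *m A *m (Q^T *m diag_mx (\row_i (Num.sqrt (d 0 i))^-1))
    = G *m (Q *m A *m Q^T) *m G by rewrite !mulmxA.
  rewrite QA.
  rewrite /G !mulmx_diag; apply/matrixP => i j; rewrite !mxE.
  have di := (hd i).1.
  have si : 0 < Num.sqrt (d 0 i) by rewrite sqrtr_gt0.
  have -> : (Num.sqrt (d 0 i))^-1 * d 0 i * (Num.sqrt (d 0 i))^-1 = 1.
    rewrite -{2}(sqr_sqrtr (ltW di)) expr2; field; exact: lt0r_neq0.
  by [].
have dMA : \det (G *m Q) ^+ 2 * \det A = 1.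
  by rewrite -(det1 _ n) -MA !det_mulmx det_tr expr2 !det_mulmx; ring.
have uM : G *m Q \in unitmx.
  rewrite unitmxE unitfE; apply/eqP => h; move: dMA; rewrite h expr2 !mul0r => /eqP.
  by rewrite eq_sym oner_eq0.
exists (G *m Q); split => //.
have AM : A *m ((G *m Q)^T *m (G *m Q)) = 1%:M.
  rewrite -[A *m _](mulKmx uM).
  have -> : G *m Q *m (A *m ((G *m Q)^T *m (G *m Q))) = (G *m Q *m A *m (G *m Q)^T) *m (G *m Q) by rewrite !mulmxA.
  by rewrite MA mul1mx mulVmx.
have uA : A \in unitmx by case: (mulmx1_unit AM).
by rewrite -[RHS](mulKmx uA) AM mulmx1.
Qed.
Lemma posdef_scale n c (A : 'M[R]_n) : 0 < c -> posdef A -> posdef (c *: A).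
Proof.
move=> c0 [sA pA]; split; first by rewrite linearZ /= sA.
move=> v v0; rewrite -scalemxAr -scalemxAl mxE; exact: mulr_gt0 (pA _ v0).
Qed.

Lemma Hform n b (S : 'M[R]_n) : 0 < \det S ->
  H_cmqgd b S = 2^-1 * (ln ((2 * pi * expR 1) ^+ n) + ln (\det S)) + b.
Proof.
move=> dS; rewrite /H_cmqgd lnM // posrE.
by apply: exprn_gt0; apply: mulr_gt0; [apply: mulr_gt0 => //; exact: pi_gt0 | exact: expR_gt0].
Qed.

Lemma scal_ineq (k x : R) : 0 < k -> 0 < x -> k * ln x - x <= k * ln k - k.
Proof.
move=> k0 x0.
have xk : 0 < x / k by rewrite divr_gt0.
have -> : x = k * (x / k) by rewrite mulrC divfK // lt0r_neq0.
rewrite lnM ?posrE //.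
have := le_ln1Dx (x := x / k - 1); rewrite [1 + _]addrC subrK => h.
have {}h := h ltac:(lra).
have : k * ln (x / k) <= k * (x / k - 1) by rewrite ler_pM2l.
rewrite mulrBr mulr1 [k * (x / k)]mulrC divfK ?lt0r_neq0 //.
lra.
Qed.

Lemma detpos n (A : 'M[R]_n) : posdef A -> 0 < \det A.
Proof.
move=> hA; have := @key n A 0 0 _ hA; case => // x x0.
by rewrite mul0r add0r oppr_le0 ltW.
Qed.

Lemma sq_ge0 n (y : 'rV[R]_n) : 0 <= (y *m y^T) 0 0.
Proof. rewrite mxE; apply: sumr_ge0 => i _; by rewrite mxE -expr2 sqr_ge0. Qed.
End S.

Theorem theorem1 (R : realType) (n : nat) (hn : (1 <= n)%N) (eps b : R)
  (heps : 0 < eps) (muc : 'rV[R]_n) (Sc : 'M[R]_n) (hSc : posdef Sc) :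
  let k := - wrightOmega_negpi (- (4 * eps ^+ 2 / n%:R) - 1) in
  let mum : 'rV[R]_n := 0 in
  let Sm := (k - 1) *: Sc in
  let mus := muc + mum in
  let Ss := Sc + Sm in
  (* (1) optimality *)
  (posdef Sm /\ posdef Ss /\ KL_cmqgd mus Ss muc Sc <= 2 * eps ^+ 2 /\
   forall (mus' : 'rV[R]_n) (Ss' : 'M[R]_n), posdef Ss' ->
     KL_cmqgd mus' Ss' muc Sc <= 2 * eps ^+ 2 ->
     H_cmqgd b Ss' <= H_cmqgd b Ss) /\
  (* (2) embedding rate I(P_s;P_m) = H(P_s) - H(P_c) *)
  H_cmqgd b Ss - H_cmqgd b Sc = n%:R / 2 * ln k.
Proof.
move=> k mum Sm mus Ss.
have n0 : 0 < n%:R :> R by rewrite ltr0n.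
pose a := 4 * eps ^+ 2 / n%:R.
have a0 : 0 < a by rewrite /a divr_gt0 // mulr_gt0 // exprn_gt0.
have na : n%:R * a = 4 * eps ^+ 2 by rewrite /a mulrC divfK // lt0r_neq0.
have [k1 ka] : 1 < k /\ k - 1 - ln k = a := k_props a0.
have k0 : 0 < k by lra.
have eSs : Ss = k *: Sc by rewrite /Ss /Sm -{1}(scale1r Sc) -scalerDl addrC subrK.
have dSc := detpos hSc.
have uSc : Sc \in unitmx by rewrite unitmxE unitfE lt0r_neq0.
have dSs : \det Ss = k ^+ n * \det Sc by rewrite eSs detZ.
have dSs0 : 0 < \det Ss by rewrite dSs mulr_gt0 // exprn_gt0.
have lnSs : ln (\det Ss) = n%:R * ln k + ln (\det Sc).
  by rewrite dSs lnM ?posrE ?exprn_gt0 // lnXn // mulr_natl.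
have [M [uM MSc dM iSc]] := whiten hSc.
split; last first.
  rewrite !Hform // lnSs; lra.
split; first by apply: posdef_scale => //; lra.
split; first by rewrite eSs; exact: posdef_scale.
split.
  rewrite /KL_cmqgd /mus /mum addr0 subrr !mul0mx (_ : (0 : 'M[R]_1) 0 0 = 0) ?mxE // addr0.
  rewrite ln_div ?posrE // lnSs [in \tr _]eSs -scalemxAr mxtraceZ mulVmx // mxtrace1.
  have : n%:R * k - n%:R * ln k - n%:R = 4 * eps ^+ 2 by rewrite -na -ka; ring.
  lra.
move=> mus' Ss' hSs' hKL.
have dSs' := detpos hSs'.
pose B := M *m Ss' *m M^T.
have pB : posdef B := posdef_congr uM hSs'.
have [dB kB] := @key R n B k (k * ln k - k) (fun x x0 => scal_ineq k0 x0) pB.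
have dBe : \det B * \det Sc = \det Ss'.
  rewrite /B !det_mulmx det_tr -[RHS]mul1r -dM; ring.
have lnB : ln (\det B) = ln (\det Ss') - ln (\det Sc).
  by rewrite -dBe lnM ?posrE //; ring.
have trB : \tr B = \tr (invmx Sc *m Ss').
  by rewrite /B mxtrace_mulC mulmxA iSc.
have mpos : 0 <= ((muc - mus') *m invmx Sc *m (muc - mus')^T) 0 0.
  rewrite iSc.
  have -> : (muc - mus') *m (M^T *m M) *m (muc - mus')^T = ((muc - mus') *m M^T) *m ((muc - mus') *m M^T)^T.
    by rewrite trmx_mul trmxK !mulmxA.
  exact: sq_ge0.
move: hKL; rewrite /KL_cmqgd ln_div ?posrE // -trB => hKL.
rewrite !Hform // lnSs.
move: kB; rewrite lnB => kB.
set L := ln (\det Ss') - ln (\det Sc) in kB.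
have : n%:R * k - n%:R * ln k - n%:R = 4 * eps ^+ 2 by rewrite -na -ka; ring.
move=> e4.
have hT : \tr B - L - n%:R <= n%:R * k - n%:R * ln k - n%:R by rewrite e4 /L; lra.
have h : (k - 1) * (L - n%:R * ln k) <= 0.
  clear -kB hT; clearbody L; nra.
have : L <= n%:R * ln k.
  rewrite -subr_le0; move: h; rewrite pmulr_rle0 //; lra.
rewrite /L; lra.
Qed.
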